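(* If $(m,n)\in\mathcal{P}_\lambda$, then $(m+k,n)\in\mathcal{P}_\lambda$ and $(m,n+k)\in\mathcal{P}_\lambda$ for every $k\in\mathbb{Z}_+$. Likewise, if $(m,n)\in\overline{\mathcal{P}}_\lambda$, then $(m+k,n)\in\overline{\mathcal{P}}_\lambda$ and $(m,n+k)\in\overline{\mathcal{P}}_\lambda$ for every $k\in\mathbb{Z}_+$.
   Context: Fix $p\in(0,1)$, $q\in[0,1]$, $\lambda>0$. $\mathbb{Z}_+=\{0,1,2,\dots\}$. Let $d:[0,\infty)\to\mathbb{R}$ satisfy: (C1) $d(0)>0$; (C2) $d$ is convex and increasing; (C3) for every $\delta>0$, $r\mapsto d(r+\delta)-d(r)$ increases to $\infty$ as $r\to\infty$. Write $d(x,y):=d(\sqrt{x^2+y^2})$ for $(x,y)\in\mathbb{R}^2$ (so $d(1)=d(1,0)=d(0,1)$), and assume (C4): $d(x,y)$ is positive, twice continuously partially differentiable, with $d_{xx},d_{xy},d_{yy}>0$ for all $x,y\ge0$. Set $\Delta_1(m,n)=d(m+1,n)-d(m,n)$, $\Delta_2(m,n)=d(m,n+1)-d(m,n)$, $\Delta_q(m,n)=q\Delta_1(m,n)+(1-q)\Delta_2(m,n)$ for $(m,n)\in\mathbb{Z}_+^2$. Relay placement MDP: the state space is $\{(m,n,z):(m,n)\in\mathbb{Z}_+^2,\ z\in\{\mathsf e,\mathsf c\}\}\cup\{\phi\}$ ($(m,n)$ is the displacement of the deploying agent from the last placed relay, or from the origin if none; $z=\mathsf e$ means the lattice path has ended,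 $z=\mathsf c$ that it continues). Actions $u\in\{0,1\}$ ($u=1$: place a relay). From $(m,n,\mathsf c)$ with $u=0$ the next state is $(m+1,n,\mathsf c)$ w.p. $(1-p)q$, $(m+1,n,\mathsf e)$ w.p. $pq$, $(m,n+1,\mathsf c)$ w.p. $(1-p)(1-q)$, $(m,n+1,\mathsf e)$ w.p. $p(1-q)$; with $u=1$ it is $(1,0,\mathsf c)$, $(1,0,\mathsf e)$, $(0,1,\mathsf c)$, $(0,1,\mathsf e)$ with these same respective probabilities. At $(m,n,\mathsf e)$ only $u=1$ is allowed and the next state is the absorbing cost-free state $\phi$. One-step cost: $d(m,n)$ at $(m,n,\mathsf e)$; $\lambda+d(m,n)$ if $u=1$ at $(m,n,\mathsf c)$; $0$ otherwise. $J_\lambda(m,n)$ is the optimal expected total cost (infimum over all, possibly history-dependent and randomized, policies) starting from $(m,n,\mathsf c)$; it satisfies the Bellman equation $J_\lambda(m,n)=\min\{c_p(m,n),c_{np}(m,n)\}$, where $c_p(m,n)=\lambda+d(m,n)+(1-p)(1-q)J_\lambda(0,1)+(1-p)qJ_\lambda(1,0)+p\,d(1)$ and $c_{np}(m,n)=(1-p)qJ_\lambda(m+1,n)+(1-p)(1-q)J_\lambda(m,n+1)+pq\,d(m+1,n)+p(1-q)\,d(m,n+1)$. The optimal placement set is $\mathcal{P}_\lambda=\{(m,n)\in\mathbb{Z}_+^2: c_p(m,n)\le c_{np}(m,n)\}$. The one-step-look-ahead (OSLA) placement set is $\overline{\mathcal{P}}_\lambda=\{(m,n)\in\mathbb{Z}_+^2: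 p(\lambda+J_\lambda(0,0))\le \Delta_q(m,n)\}$. *)

(* Defs.v *)
From Stdlib Require Import Reals Lra List.
Import ListNotations.
Open Scope R_scope.

Definition d2 (d : R -> R) (x y : R) : R := d (sqrt (x ^ 2 + y ^ 2)).

Definition dmn (d : R -> R) (m n : nat) : R := d2 d (INR m) (INR n).

Definition Delta1 d m n := dmn d (S m) n - dmn d m n.
Definition Delta2 d m n := dmn d m (S n) - dmn d m n.
Definition Deltaq d (q : R) m n := q * Delta1 d m n + (1 - q) * Delta2 d m n.

(** (C1)-(C3) on [0,oo). "Increasing" is read as non-decreasing. *)
Definition cond_C1 (d : R -> R) : Prop := 0 < d 0.
Definition cond_C2 (d : R -> R) : Prop :=
  (forall x y t, 0 <= x -> 0 <= y -> 0 <= t <= 1 ->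
     d (t * x + (1 - t) * y) <= t * d x + (1 - t) * d y) /\
  (forall x y, 0 <= x -> x <= y -> d x <= d y).
Definition cond_C3 (d : R -> R) : Prop :=
  forall delta, 0 < delta ->
    (forall r s, 0 <= r -> r <= s -> d (r + delta) - d r <= d (s + delta) - d s) /\
    (forall M, exists r0, 0 <= r0 /\ forall r, r0 <= r -> M < d (r + delta) - d r).

Definition cont2 (f : R -> R -> R) : Prop :=
  forall x y eps, 0 < eps -> exists delta, 0 < delta /\
    forall x' y', Rabs (x' - x) < delta -> Rabs (y' - y) < delta ->
      Rabs (f x' y' - f x y) < eps.

(** (C4): d(x,y) positive for x,y>=0, twice continuously partially differentiable
    (on R^2, its natural domain), with positive second partials on the open quadrant. *)
Definition cond_C4 (d : R -> R) : Prop :=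
  exists dx dy dxx dxy dyx dyy : R -> R -> R,
    (forall x y, derivable_pt_lim (fun t => d2 d t y) x (dx x y)) /\
    (forall x y, derivable_pt_lim (fun t => d2 d x t) y (dy x y)) /\
    (forall x y, derivable_pt_lim (fun t => dx t y) x (dxx x y)) /\
    (forall x y, derivable_pt_lim (fun t => dx x t) y (dxy x y)) /\
    (forall x y, derivable_pt_lim (fun t => dy t y) x (dyx x y)) /\
    (forall x y, derivable_pt_lim (fun t => dy x t) y (dyy x y)) /\
    cont2 dxx /\ cont2 dxy /\ cont2 dyx /\ cont2 dyy /\
    (forall x y, 0 <= x -> 0 <= y -> 0 < d2 d x y) /\
    (forall x y, 0 < x -> 0 < y ->
       0 < dxx x y /\ 0 < dxy x y /\ 0 < dyy x y).

(** States: (m,n,c), (m,n,e), phi. *)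
Inductive state : Type :=
| Cont (m n : nat)
| End (m n : nat)
| Phi.

(** A history is the list of past (state, action) pairs; action true = place (u=1). *)
Definition history := list (state * bool).

(** A general (history-dependent, randomized) policy: probability of u=1
    given the past history and current state. At End states only u=1 is
    allowed, so the policy value there is irrelevant. *)
Definition policy := history -> state -> R.

Definition valid_policy (pi : policy) : Prop :=
  forall h s, 0 <= pi h s <= 1.

Definition step_exp (p q : R) (f : state -> R) (m n : nat) : R :=
  (1 - p) * q * f (Cont (S m) n) + p * q * f (End (S m) n)
  + (1 - p) * (1 - q) * f (Cont m (S n)) + p * (1 - q) * f (End m (S n)).

Fixpoint costN (p q lam : R) (d : R -> R) (pi : policy) (N : nat)
    (h : history) (s : state) {struct N} : R :=
  match N with
  | O => 0
  | S N' =>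
    match s with
    | Phi => costN p q lam d pi N' (h ++ [(Phi, true)]) Phi
    | End m n => dmn d m n + costN p q lam d pi N' (h ++ [(s, true)]) Phi
    | Cont m n =>
        let a := pi h s in
        a * (lam + dmn d m n
               + step_exp p q (costN p q lam d pi N' (h ++ [(s, true)])) 0 0)
        + (1 - a) * step_exp p q (costN p q lam d pi N' (h ++ [(s, false)])) m n
    end
  end.

(** Costs are nonnegative,
    so the partial expected costs are nondecreasing; a policy whose partial
    costs do not converge has infinite total cost and does not matter for
    the infimum. *)
Definition total_cost (p q lam : R) (d : R -> R) (pi : policy) (m n : nat) (v : R) : Prop :=
  Un_cv (fun N => costN p q lam d pi N [] (Cont m n)) v.

Definition is_optimal_cost (p q lam : R) (d : R -> R) (J : nat -> nat -> R) : Prop :=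
  forall m n,
    (forall pi v, valid_policy pi -> total_cost p q lam d pi m n v -> J m n <= v) /\
    (forall eps, 0 < eps -> exists pi v,
        valid_policy pi /\ total_cost p q lam d pi m n v /\ v < J m n + eps).

Definition c_p (p q lam : R) (d : R -> R) (J : nat -> nat -> R) (m n : nat) : R :=
  lam + dmn d m n + (1 - p) * (1 - q) * J 0%nat 1%nat + (1 - p) * q * J 1%nat 0%nat
  + p * d 1.

Definition c_np (p q : R) (d : R -> R) (J : nat -> nat -> R) (m n : nat) : R :=
  (1 - p) * q * J (S m) n + (1 - p) * (1 - q) * J m (S n)
  + p * q * dmn d (S m) n + p * (1 - q) * dmn d m (S n).

Definition in_P (p q lam : R) (d : R -> R) (J : nat -> nat -> R) (m n : nat) : Prop :=
  c_p p q lam d J m n <= c_np p q d J m n.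

Definition in_Pbar (p q lam : R) (d : R -> R) (J : nat -> nat -> R) (m n : nat) : Prop :=
  p * (lam + J 0%nat 0%nat) <= Deltaq d q m n.

(* Main.v *)
Require Import Defs.
From Stdlib Require Import Reals Lra Psatz List.
Import ListNotations.
Open Scope R_scope.
Local Notation D2 := Defs.d2.

Lemma mvt_mono (f f' : R -> R) a b :
  (forall x, derivable_pt_lim f x (f' x)) -> a <= b ->
  (forall c, a < c < b -> 0 <= f' c) -> f a <= f b.
Proof.
  intros Hd Hab Hpos. destruct (Rle_lt_or_eq_dec _ _ Hab) as [Hlt|Heq].
  - destruct (MVT_cor2 f f' a b Hlt (fun c _ => Hd c)) as [c [E Hc]].
    assert (0 <= f' c) by (apply Hpos; lra). nra.
  - subst; lra.
Qed.

Lemma cont2_nonneg (f : R -> R -> R) x y :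
  cont2 f -> (forall x y, 0 < x -> 0 < y -> 0 < f x y) -> 0 <= x -> 0 <= y -> 0 <= f x y.
Proof.
  intros Hc Hp Hx Hy. destruct (Rle_or_lt 0 (f x y)) as [H|H]; auto.
  destruct (Hc x y (- f x y)) as [de [Hde Hn]]; [lra|].
  specialize (Hn (x + de/2) (y + de/2)).
  assert (A1 : Rabs (x + de/2 - x) < de) by (rewrite Rabs_right; lra).
  assert (A2 : Rabs (y + de/2 - y) < de) by (rewrite Rabs_right; lra).
  specialize (Hn A1 A2). assert (0 < f (x+de/2) (y+de/2)) by (apply Hp; lra).
  apply Rabs_def2 in Hn. lra.
Qed.

Lemma d_analytic (d : R -> R) : cond_C4 d ->
  (forall x y, 0 <= x -> 0 <= y -> D2 d (x+1+1) y - D2 d (x+1) y >= D2 d (x+1) y - D2 d x y) /\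
  (forall x y, 0 <= x -> 0 <= y -> D2 d x (y+1+1) - D2 d x (y+1) >= D2 d x (y+1) - D2 d x y) /\
  (forall x y, 0 <= x -> 0 <= y -> D2 d (x+1) (y+1) - D2 d x (y+1) >= D2 d (x+1) y - D2 d x y).
Proof.
  intros [dx [dy [dxx [dxy [dyx [dyy [Hx [Hy [Hxx [Hxy [Hyx [Hyy [Cxx [Cxy [Cyx [Cyy [Hpos Hsec]]]]]]]]]]]]]]]]].
  assert (Nxx : forall x y, 0 <= x -> 0 <= y -> 0 <= dxx x y).
  { intros; apply cont2_nonneg; auto. intros; apply Hsec; auto. }
  assert (Nxy : forall x y, 0 <= x -> 0 <= y -> 0 <= dxy x y).
  { intros; apply cont2_nonneg; auto. intros; apply Hsec; auto. }
  assert (Nyy : forall x y, 0 <= x -> 0 <= y -> 0 <= dyy x y).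
  { intros; apply cont2_nonneg; auto. intros; apply Hsec; auto. }
  assert (Mx : forall x1 x2 y, 0 <= x1 <= x2 -> 0 <= y -> dx x1 y <= dx x2 y).
  { intros x1 x2 y H1 H2. apply (mvt_mono (fun t => dx t y) (fun t => dxx t y)); auto; [lra|].
    intros; apply Nxx; lra. }
  assert (My : forall x y1 y2, 0 <= x -> 0 <= y1 <= y2 -> dx x y1 <= dx x y2).
  { intros x y1 y2 H1 H2. apply (mvt_mono (fun t => dx x t) (fun t => dxy x t)); auto; [lra|].
    intros; apply Nxy; lra. }
  assert (Myy : forall x y1 y2, 0 <= x -> 0 <= y1 <= y2 -> dy x y1 <= dy x y2).
  { intros x y1 y2 H1 H2. apply (mvt_mono (fun t => dy x t) (fun t => dyy x t)); auto; [lra|].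
    intros; apply Nyy; lra. }
  split; [|split].
  - intros x y H1 H2.
    destruct (MVT_cor2 (fun t => D2 d t y) (fun t => dx t y) x (x+1)) as [c1 [E1 Hc1]]; [lra| intros; apply Hx|].
    destruct (MVT_cor2 (fun t => D2 d t y) (fun t => dx t y) (x+1) (x+1+1)) as [c2 [E2 Hc2]]; [lra| intros; apply Hx|].
    assert (dx c1 y <= dx c2 y) by (apply Mx; lra). simpl in *. nra.
  - intros x y H1 H2.
    destruct (MVT_cor2 (fun t => D2 d x t) (fun t => dy x t) y (y+1)) as [c1 [E1 Hc1]]; [lra| intros; apply Hy|].
    destruct (MVT_cor2 (fun t => D2 d x t) (fun t => dy x t) (y+1) (y+1+1)) as [c2 [E2 Hc2]]; [lra| intros; apply Hy|].
    assert (dy x c1 <= dy x c2) by (apply Myy; lra). simpl in *. nra.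
  - intros x y H1 H2.
    assert (G : (fun t => D2 d t (y+1) - D2 d t y) x <= (fun t => D2 d t (y+1) - D2 d t y) (x+1)).
    { apply (mvt_mono (fun t => D2 d t (y+1) - D2 d t y) (fun t => dx t (y+1) - dx t y) x (x+1)).
      - intros t. apply derivable_pt_lim_minus; apply Hx.
      - lra.
      - intros c Hc. assert (dx c y <= dx c (y+1)) by (apply My; lra). lra. }
    simpl in G. lra.
Qed.

Lemma INR_S' n : INR (S n) = INR n + 1.
Proof. apply S_INR. Qed.

Lemma Deltaq_mono (d : R -> R) q : cond_C4 d -> 0 <= q <= 1 ->
  (forall m n, Deltaq d q m n <= Deltaq d q (S m) n) /\
  (forall m n, Deltaq d q m n <= Deltaq d q m (S n)).
Proof.
  intros H4 Hq. destruct (d_analytic d H4) as [S1 [S2 S3]].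
  unfold Deltaq, Delta1, Delta2, dmn. split; intros m n; rewrite ?INR_S'.
  - specialize (S1 (INR m) (INR n) (pos_INR _) (pos_INR _)).
    specialize (S3 (INR m) (INR n) (pos_INR _) (pos_INR _)). nra.
  - specialize (S2 (INR m) (INR n) (pos_INR _) (pos_INR _)).
    specialize (S3 (INR m) (INR n) (pos_INR _) (pos_INR _)). nra.
Qed.

Lemma dmn_props (d : R -> R) : cond_C2 d -> cond_C4 d ->
  (forall m n, 0 <= dmn d m n) /\
  (forall m n, dmn d m n <= dmn d (S m) n) /\
  (forall m n, dmn d m n <= dmn d m (S n)) /\
  dmn d 1 0 = d 1 /\ dmn d 0 1 = d 1.
Proof.
  intros [_ Hinc] H4.
  assert (Hpos : forall x y, 0 <= x -> 0 <= y -> 0 < D2 d x y).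
  { destruct H4 as [dx [dy [dxx [dxy [dyx [dyy H]]]]]]. tauto. }
  unfold dmn, D2, d2. split; [|split; [|split; [|split]]].
  - intros; apply Rlt_le, (Hpos (INR m) (INR n)); apply pos_INR.
  - intros m n; rewrite INR_S'. apply Hinc. apply sqrt_pos. apply sqrt_le_1_alt.
    pose proof (pos_INR m); nra.
  - intros m n; rewrite INR_S'. apply Hinc. apply sqrt_pos. apply sqrt_le_1_alt.
    pose proof (pos_INR n); nra.
  - simpl. replace (1 * (1 * 1) + 0 * (0 * 1)) with 1 by ring. rewrite sqrt_1; auto.
  - simpl. replace (0 * (0 * 1) + 1 * (1 * 1)) with 1 by ring. rewrite sqrt_1; auto.
Qed.

Lemma costN_Phi p q lam d pi N h : costN p q lam d pi N h Phi = 0.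
Proof. revert h; induction N; intros h; simpl; auto. Qed.

Lemma costN_End p q lam d pi N h m n : costN p q lam d pi (S N) h (End m n) = dmn d m n.
Proof. simpl. rewrite costN_Phi. ring. Qed.

Lemma costN_shift p q lam d pi x N : forall h s,
  costN p q lam d pi N (x :: h) s = costN p q lam d (fun h s => pi (x :: h) s) N h s.
Proof.
  induction N as [|N IH]; intros h s; [reflexivity|].
  destruct s; simpl; unfold step_exp; rewrite ?IH; reflexivity.
Qed.

Definition good p q lam d := 0 <= p <= 1 /\ 0 <= q <= 1 /\ 0 <= lam /\ forall m n, 0 <= dmn d m n.

Lemma costN_nonneg p q lam d pi : good p q lam d -> valid_policy pi ->
  forall N h s, 0 <= costN p q lam d pi N h s.
Proof.
  intros [Hp [Hq [Hl Hd]]] Hpi N. induction N as [|N IH]; intros h s; simpl; [lra|].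
  destruct s as [m n|m n|].
  - specialize (Hpi h (Cont m n)). unfold step_exp.
    pose proof (Hd m n).
    repeat match goal with |- context [costN p q lam d pi N ?h' ?s'] =>
      let H := fresh in pose proof (IH h' s') as H; revert H;
      generalize (costN p q lam d pi N h' s'); intros ? ? end.
    apply Rplus_le_le_0_compat; apply Rmult_le_pos; try lra;
    repeat apply Rplus_le_le_0_compat; try apply Rmult_le_pos; try apply Rmult_le_pos; try nra.
  - pose proof (Hd m n). pose proof (IH (h ++ [(End m n, true)]) Phi). lra.
  - apply IH.
Qed.

Lemma step_exp_mono p q (f g : state -> R) m n : 0 <= p <= 1 -> 0 <= q <= 1 ->
  (forall s, f s <= g s) -> step_exp p q f m n <= step_exp p q g m n.
Proof.
  intros Hp Hq H. unfold step_exp.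
  pose proof (H (Cont (S m) n)); pose proof (H (End (S m) n));
  pose proof (H (Cont m (S n))); pose proof (H (End m (S n))).
  assert (0 <= (1-p)*q) by nra. assert (0 <= p*q) by nra.
  assert (0 <= (1-p)*(1-q)) by nra. assert (0 <= p*(1-q)) by nra.
  repeat apply Rplus_le_compat; apply Rmult_le_compat_l; auto.
Qed.

Lemma step_exp_nonneg p q (f : state -> R) m n : 0 <= p <= 1 -> 0 <= q <= 1 ->
  (forall s, 0 <= f s) -> 0 <= step_exp p q f m n.
Proof.
  intros Hp Hq H. replace 0 with (step_exp p q (fun _ => 0) m n) by (unfold step_exp; ring).
  apply step_exp_mono; auto.
Qed.

Lemma costN_grow p q lam d pi : good p q lam d -> valid_policy pi ->
  forall N h s, costN p q lam d pi N h s <= costN p q lam d pi (S N) h s.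
Proof.
  intros G Hpi N. pose proof (costN_nonneg _ _ _ _ _ G Hpi) as Nn.
  destruct G as [Hp [Hq [Hl Hd]]].
  induction N as [|N IH]; intros h s; [simpl; apply (Nn 1%nat)|].
  destruct s as [m n|m n|].
  - change (costN p q lam d pi (S N) h (Cont m n)) with
      (pi h (Cont m n) * (lam + dmn d m n + step_exp p q (costN p q lam d pi N (h ++ [(Cont m n, true)])) 0 0)
       + (1 - pi h (Cont m n)) * step_exp p q (costN p q lam d pi N (h ++ [(Cont m n, false)])) m n).
    change (costN p q lam d pi (S (S N)) h (Cont m n)) with
      (pi h (Cont m n) * (lam + dmn d m n + step_exp p q (costN p q lam d pi (S N) (h ++ [(Cont m n, true)])) 0 0)
       + (1 - pi h (Cont m n)) * step_exp p q (costN p q lam d pi (S N) (h ++ [(Cont m n, false)])) m n).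
    specialize (Hpi h (Cont m n)).
    apply Rplus_le_compat; apply Rmult_le_compat_l; try lra.
    + apply Rplus_le_compat_l. apply step_exp_mono; auto.
    + apply step_exp_mono; auto.
  - simpl. apply Rplus_le_compat_l. apply IH.
  - simpl. apply IH.
Qed.

Lemma pow_01 x N : 0 <= x <= 1 -> 0 <= x ^ N <= 1.
Proof. intros H; induction N; simpl; nra. Qed.

Lemma costN_lower p q lam d pi : good p q lam d -> valid_policy pi ->
  (forall m n, dmn d m n <= dmn d (S m) n) -> (forall m n, dmn d m n <= dmn d m (S n)) ->
  forall N h m n, (1 - (1-p)^N) * dmn d m n <= costN p q lam d pi (S N) h (Cont m n).
Proof.
  intros G Hpi M1 M2 N. pose proof (costN_nonneg _ _ _ _ _ G Hpi) as Nn.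
  destruct G as [Hp [Hq [Hl Hd]]].
  induction N as [|N IH]; intros h m n.
  - replace ((1 - (1-p)^0) * dmn d m n) with 0 by (simpl; ring). apply (Nn 1%nat).
  - change (costN p q lam d pi (S (S N)) h (Cont m n)) with
      (pi h (Cont m n) * (lam + dmn d m n + step_exp p q (costN p q lam d pi (S N) (h ++ [(Cont m n, true)])) 0 0)
       + (1 - pi h (Cont m n)) * step_exp p q (costN p q lam d pi (S N) (h ++ [(Cont m n, false)])) m n).
    set (a := pi h (Cont m n)). assert (Ha : 0 <= a <= 1) by apply Hpi.
    set (t := (1-p)^N). assert (Ht : 0 <= t <= 1) by (apply pow_01; lra).
    change ((1-p)^(S N)) with ((1-p) * t).
    set (D := dmn d m n). assert (HD : 0 <= D) by apply Hd.
    assert (SE1 : 0 <= step_exp p q (costN p q lam d pi (S N) (h ++ [(Cont m n, true)])) 0 0)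
      by (apply step_exp_nonneg; auto).
    assert (SE2 : (1 - (1-p)*t) * D <= step_exp p q (costN p q lam d pi (S N) (h ++ [(Cont m n, false)])) m n).
    { unfold step_exp. rewrite !costN_End.
      pose proof (IH (h ++ [(Cont m n, false)]) (S m) n) as X1.
      pose proof (IH (h ++ [(Cont m n, false)]) m (S n)) as X2.
      pose proof (M1 m n); pose proof (M2 m n). fold D in H, H0 |- *.
      revert X1 X2. fold t.
      generalize (costN p q lam d pi (S N) (h ++ [(Cont m n, false)]) (Cont (S m) n)) as c1.
      generalize (costN p q lam d pi (S N) (h ++ [(Cont m n, false)]) (Cont m (S n))) as c2.
      intros c2 c1 X1 X2.
      assert (E1 : (1-t) * D <= c1) by nra. assert (E2 : (1-t) * D <= c2) by nra.
      assert (0 <= (1-p)*q) by nra. assert (0 <= p*q) by nra.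
      assert (0 <= (1-p)*(1-q)) by nra. assert (0 <= p*(1-q)) by nra.
      assert ((1-p)*q*((1-t)*D) <= (1-p)*q*c1) by (apply Rmult_le_compat_l; auto).
      assert ((1-p)*(1-q)*((1-t)*D) <= (1-p)*(1-q)*c2) by (apply Rmult_le_compat_l; auto).
      assert (p*q*D <= p*q*dmn d (S m) n) by (apply Rmult_le_compat_l; auto).
      assert (p*(1-q)*D <= p*(1-q)*dmn d m (S n)) by (apply Rmult_le_compat_l; auto).
      nra. }
    assert (0 <= (1-p)*t) by nra.
    assert (a * ((1 - (1-p)*t) * D) <= a * (lam + D + step_exp p q (costN p q lam d pi (S N) (h ++ [(Cont m n, true)])) 0 0)).
    { apply Rmult_le_compat_l; [lra|]. nra. }
    assert ((1-a) * ((1 - (1-p)*t) * D) <= (1-a) * step_exp p q (costN p q lam d pi (S N) (h ++ [(Cont m n, false)])) m n).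
    { apply Rmult_le_compat_l; [lra|]. auto. }
    lra.
Qed.

Definition fs (h : history) (s : state) : state :=
  match h with [] => s | (y, _) :: _ => y end.

Definition state_eqb (a b : state) : bool :=
  match a, b with
  | Cont m n, Cont m' n' => Nat.eqb m m' && Nat.eqb n n'
  | End m n, End m' n' => Nat.eqb m m' && Nat.eqb n n'
  | Phi, Phi => true
  | _, _ => false
  end.

Lemma state_eqb_refl s : state_eqb s s = true.
Proof. destruct s; simpl; rewrite ?Nat.eqb_refl; reflexivity. Qed.

Lemma costN_fs_congr p q lam d pi pi' N : forall h s,
  (forall h' s', fs h' s' = fs h s -> pi h' s' = pi' h' s') ->
  costN p q lam d pi N h s = costN p q lam d pi' N h s.
Proof.
  induction N as [|N IH]; intros h s H; [reflexivity|].
  assert (Hf : forall b s', fs (h ++ [(s, b)]) s' = fs h s).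
  { intros b s'. destruct h as [|[y c] h]; reflexivity. }
  destruct s as [m n|m n|]; simpl.
  - unfold step_exp. rewrite (H h (Cont m n) eq_refl).
    rewrite !(IH (h ++ [(Cont m n, true)])), !(IH (h ++ [(Cont m n, false)])); try reflexivity;
      intros h' s' E; apply H; rewrite E; apply Hf.
  - rewrite (IH (h ++ [(End m n, true)])); [reflexivity|].
    intros h' s' E; apply H; rewrite E; apply Hf.
  - rewrite (IH (h ++ [(Phi, true)])); [reflexivity|].
    intros h' s' E; apply H; rewrite E; apply Hf.
Qed.

Definition splitpol (a0 : R) (t1 : state) (pi1 pi2 : policy) : policy :=
  fun h s => match h with
             | [] => a0
             | _ :: h' => if state_eqb (fs h' s) t1 then pi1 h' s else pi2 h' s
             end.

Lemma split_cost1 p q lam d a0 t1 pi1 pi2 x N :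
  costN p q lam d (splitpol a0 t1 pi1 pi2) N [x] t1 = costN p q lam d pi1 N [] t1.
Proof.
  rewrite costN_shift. apply costN_fs_congr. intros h' s' E. simpl in E. unfold splitpol.
  rewrite E, state_eqb_refl. reflexivity.
Qed.

Lemma split_cost2 p q lam d a0 t1 t2 pi1 pi2 x N : state_eqb t2 t1 = false ->
  costN p q lam d (splitpol a0 t1 pi1 pi2) N [x] t2 = costN p q lam d pi2 N [] t2.
Proof.
  intros Hne. rewrite costN_shift. apply costN_fs_congr. intros h' s' E. simpl in E. unfold splitpol.
  rewrite E, Hne. reflexivity.
Qed.

Lemma split_valid a0 t1 pi1 pi2 : 0 <= a0 <= 1 -> valid_policy pi1 -> valid_policy pi2 ->
  valid_policy (splitpol a0 t1 pi1 pi2).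
Proof.
  intros H0 H1 H2 h s. destruct h; simpl; auto. destruct (state_eqb _ _); auto.
Qed.

Lemma costN_Cont p q lam d pi N h m n : costN p q lam d pi (S N) h (Cont m n) =
  pi h (Cont m n) * (lam + dmn d m n + step_exp p q (costN p q lam d pi N (h ++ [(Cont m n, true)])) 0 0)
  + (1 - pi h (Cont m n)) * step_exp p q (costN p q lam d pi N (h ++ [(Cont m n, false)])) m n.
Proof. reflexivity. Qed.

Lemma pow_small c x K : 0 <= c < 1 -> 0 <= K -> (forall N, x <= c ^ N * K) -> x <= 0.
Proof.
  intros Hc HK H. destruct (Rle_or_lt x 0) as [|Hx]; auto.
  destruct (Req_dec K 0) as [E|E]. { specialize (H O). subst. lra. }
  destruct (pow_lt_1_zero c) with (y := x / K) as [N HN].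
  { rewrite Rabs_right; lra. } { apply Rdiv_lt_0_compat; lra. }
  specialize (HN N (le_n N)). specialize (H N). rewrite Rabs_right in HN.
  2: { apply Rle_ge, pow_le; lra. }
  assert (c ^ N * K < x / K * K) by (apply Rmult_lt_compat_r; lra).
  field_simplify in H0; lra.
Qed.

Lemma Un_cv_shift u l : Un_cv (fun N => u (S N)) l -> Un_cv u l.
Proof.
  intros H eps He. destruct (H eps He) as [N HN]. exists (S N). intros n Hn.
  destruct n as [|n]; [lia|]. apply HN. lia.
Qed.

Lemma Un_cv_const c : Un_cv (fun _ => c) c.
Proof. intros eps He. exists O. intros. unfold R_dist. rewrite Rminus_diag, Rabs_R0. auto. Qed.

Lemma Un_cv_comb X1 X2 v1 v2 K a b : Un_cv X1 v1 -> Un_cv X2 v2 ->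
  Un_cv (fun N => K + a * X1 (S N) + b * X2 (S N)) (K + a * v1 + b * v2).
Proof.
  intros H1 H2.
  assert (H1' : Un_cv (fun N => X1 (S N)) v1).
  { intros eps He. destruct (H1 eps He) as [N HN]. exists N. intros; apply HN; lia. }
  assert (H2' : Un_cv (fun N => X2 (S N)) v2).
  { intros eps He. destruct (H2 eps He) as [N HN]. exists N. intros; apply HN; lia. }
  apply CV_plus; [apply CV_plus|]; try apply Un_cv_const; apply CV_mult; auto; apply Un_cv_const.
Qed.

Lemma Un_cv_ext u w l : (forall N, u N = w N) -> Un_cv w l -> Un_cv u l.
Proof. intros E H eps He. destruct (H eps He) as [N HN]. exists N. intros n Hn. rewrite E. auto. Qed.

Lemma piece (u : nat -> R) w J0 B : Un_growing u -> 0 <= w -> (forall N, w * u N <= B) ->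
  (forall l, Un_cv u l -> J0 <= l) ->
  forall eps, 0 < eps -> exists N0, forall N, (N0 <= N)%nat -> w * J0 - eps <= w * u N.
Proof.
  intros Hg Hw HB HJ eps He. destruct (Req_dec w 0) as [E|E].
  { exists O. intros. subst. lra. }
  assert (Hub : has_ub u).
  { exists (B / w). intros x [i ->]. specialize (HB i).
    apply (Rmult_le_reg_l w); [lra|]. field_simplify; lra. }
  destruct (growing_cv u Hg Hub) as [l Hl].
  pose proof (HJ l Hl) as HJl.
  destruct (Hl (eps / w)) as [N0 HN0]. { apply Rdiv_lt_0_compat; lra. }
  exists N0. intros N HN. specialize (HN0 N HN). unfold R_dist in HN0.
  apply Rabs_def2 in HN0. destruct HN0 as [_ H2].
  assert (w * (l - eps / w) <= w * u N) by (apply Rmult_le_compat_l; lra).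
  field_simplify in H; [|lra]. assert (w*J0 <= w*l) by (apply Rmult_le_compat_l; lra). lra.
Qed.


Lemma J_le_cp p q lam d J : good p q lam d -> dmn d 1 0 = d 1 -> dmn d 0 1 = d 1 ->
  is_optimal_cost p q lam d J -> forall m n, J m n <= c_p p q lam d J m n.
Proof.
  intros G Hd1 Hd2 HJ m n. pose proof G as [Hp [Hq [Hl Hd]]].
  apply le_epsilon. intros eps He.
  destruct (proj2 (HJ 1%nat 0%nat) eps He) as [pi1 [v1 [V1 [T1 L1]]]].
  destruct (proj2 (HJ 0%nat 1%nat) eps He) as [pi2 [v2 [V2 [T2 L2]]]].
  set (pol := splitpol 1 (Cont 1 0) pi1 pi2).
  assert (Vp : valid_policy pol) by (apply split_valid; auto; lra).
  set (V := (lam + dmn d m n + p * d 1) + (1-p)*q * v1 + (1-p)*(1-q) * v2).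
  assert (T : total_cost p q lam d pol m n V).
  { unfold total_cost.
    apply (Un_cv_shift (fun N => costN p q lam d pol N [] (Cont m n))).
    apply (Un_cv_shift (fun N => costN p q lam d pol (S N) [] (Cont m n))).
    eapply Un_cv_ext; [|apply (Un_cv_comb _ _ _ _ (lam + dmn d m n + p * d 1) ((1-p)*q) ((1-p)*(1-q)) T1 T2)].
    intros N. simpl (S N). rewrite costN_Cont. unfold step_exp.
    change (pol [] (Cont m n)) with 1. simpl ([] ++ _).
    unfold pol. rewrite split_cost1, (split_cost2 _ _ _ _ _ _ (Cont 0 1) _ _ (Cont m n, true)) by reflexivity. rewrite !costN_End, Hd1, Hd2. ring. }
  pose proof (proj1 (HJ m n) pol V Vp T).
  unfold c_p. unfold V in H.
  assert (0 <= (1-p)*q) by nra. assert (0 <= (1-p)*(1-q)) by nra.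
  assert ((1-p)*q*v1 <= (1-p)*q*(J 1%nat 0%nat + eps)) by (apply Rmult_le_compat_l; lra).
  assert ((1-p)*(1-q)*v2 <= (1-p)*(1-q)*(J 0%nat 1%nat + eps)) by (apply Rmult_le_compat_l; lra).
  nra.
Qed.

Lemma J_le_cnp p q lam d J : good p q lam d ->
  is_optimal_cost p q lam d J -> forall m n, J m n <= c_np p q d J m n.
Proof.
  intros G HJ m n. pose proof G as [Hp [Hq [Hl Hd]]].
  apply le_epsilon. intros eps He.
  destruct (proj2 (HJ (S m) n) eps He) as [pi1 [v1 [V1 [T1 L1]]]].
  destruct (proj2 (HJ m (S n)) eps He) as [pi2 [v2 [V2 [T2 L2]]]].
  set (pol := splitpol 0 (Cont (S m) n) pi1 pi2).
  assert (Vp : valid_policy pol) by (apply split_valid; auto; lra).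
  set (V := (p * q * dmn d (S m) n + p * (1-q) * dmn d m (S n)) + (1-p)*q * v1 + (1-p)*(1-q) * v2).
  assert (Hne : state_eqb (Cont m (S n)) (Cont (S m) n) = false).
  { simpl. rewrite (proj2 (Nat.eqb_neq m (S m))); [reflexivity|lia]. }
  assert (T : total_cost p q lam d pol m n V).
  { unfold total_cost.
    apply (Un_cv_shift (fun N => costN p q lam d pol N [] (Cont m n))).
    apply (Un_cv_shift (fun N => costN p q lam d pol (S N) [] (Cont m n))).
    eapply Un_cv_ext; [|apply (Un_cv_comb _ _ _ _ (p * q * dmn d (S m) n + p * (1-q) * dmn d m (S n)) ((1-p)*q) ((1-p)*(1-q)) T1 T2)].
    intros N. simpl (S N). rewrite costN_Cont. unfold step_exp.
    change (pol [] (Cont m n)) with 0. simpl ([] ++ _).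
    unfold pol. rewrite split_cost1, (split_cost2 _ _ _ _ _ _ (Cont m (S n)) _ _ (Cont m n, false)) by exact Hne. rewrite !costN_End. ring. }
  pose proof (proj1 (HJ m n) pol V Vp T).
  unfold c_np. unfold V in H.
  assert (0 <= (1-p)*q) by nra. assert (0 <= (1-p)*(1-q)) by nra.
  assert ((1-p)*q*v1 <= (1-p)*q*(J (S m) n + eps)) by (apply Rmult_le_compat_l; lra).
  assert ((1-p)*(1-q)*v2 <= (1-p)*(1-q)*(J m (S n) + eps)) by (apply Rmult_le_compat_l; lra).
  nra.
Qed.

Lemma J_ge_d p q lam d J : good p q lam d -> 0 < p ->
  (forall m n, dmn d m n <= dmn d (S m) n) -> (forall m n, dmn d m n <= dmn d m (S n)) ->
  is_optimal_cost p q lam d J -> forall m n, dmn d m n <= J m n.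
Proof.
  intros G Hp0 M1 M2 HJ m n. pose proof G as [Hp [Hq [Hl Hd]]].
  apply le_epsilon. intros eps He.
  destruct (proj2 (HJ m n) eps He) as [pi [v [Vp [T L]]]].
  assert (Hg : Un_growing (fun N => costN p q lam d pi N [] (Cont m n))).
  { intros N. apply costN_grow; auto. }
  assert (dmn d m n - v <= 0).
  { apply (pow_small (1-p) _ (dmn d m n)); [lra|auto|].
    intros N. pose proof (growing_ineq _ _ Hg T (S N)).
    pose proof (costN_lower _ _ _ _ _ G Vp M1 M2 N [] m n). simpl in H, H0. lra. }
  lra.
Qed.

Lemma J_ge_min p q lam d J : good p q lam d -> dmn d 1 0 = d 1 -> dmn d 0 1 = d 1 ->
  is_optimal_cost p q lam d J -> forall m n, Rmin (c_p p q lam d J m n) (c_np p q d J m n) <= J m n.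
Proof.
  intros G Hd1 Hd2 HJ m n. pose proof G as [Hp [Hq [Hl Hd]]].
  apply le_epsilon. intros eps' He'. set (eps := eps' / 5). assert (He : 0 < eps) by (unfold eps; lra).
  destruct (proj2 (HJ m n) eps He) as [pi [v [Vp [T L]]]].
  set (a := pi [] (Cont m n)). assert (Ha : 0 <= a <= 1) by apply Vp.
  set (piA := fun h s => pi ((Cont m n, true) :: h) s).
  set (piB := fun h s => pi ((Cont m n, false) :: h) s).
  assert (VA : valid_policy piA) by (intros h s; apply Vp).
  assert (VB : valid_policy piB) by (intros h s; apply Vp).
  set (X1 := fun N => costN p q lam d piA N [] (Cont 1 0)).
  set (X2 := fun N => costN p q lam d piA N [] (Cont 0 1)).
  set (Y1 := fun N => costN p q lam d piB N [] (Cont (S m) n)).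
  set (Y2 := fun N => costN p q lam d piB N [] (Cont m (S n))).
  set (P1 := a * ((1-p)*q)). set (P2 := a * ((1-p)*(1-q))).
  set (P3 := (1-a) * ((1-p)*q)). set (P4 := (1-a) * ((1-p)*(1-q))).
  assert (EQ : forall N, costN p q lam d pi (S (S N)) [] (Cont m n) =
     a * c_p p q lam d J m n + (1-a) * c_np p q d J m n
     + (P1 * X1 (S N) - P1 * J 1%nat 0%nat) + (P2 * X2 (S N) - P2 * J 0%nat 1%nat)
     + (P3 * Y1 (S N) - P3 * J (S m) n) + (P4 * Y2 (S N) - P4 * J m (S n))).
  { intros N. rewrite costN_Cont. unfold step_exp. fold a. simpl ([] ++ _).
    rewrite !costN_shift, !costN_End, Hd1, Hd2.
    change (costN p q lam d (fun h s => pi ((Cont m n, true) :: h) s) (S N) [] (Cont 1 0)) with (X1 (S N)).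
    change (costN p q lam d (fun h s => pi ((Cont m n, true) :: h) s) (S N) [] (Cont 0 1)) with (X2 (S N)).
    change (costN p q lam d (fun h s => pi ((Cont m n, false) :: h) s) (S N) [] (Cont (S m) n)) with (Y1 (S N)).
    change (costN p q lam d (fun h s => pi ((Cont m n, false) :: h) s) (S N) [] (Cont m (S n))) with (Y2 (S N)).
    unfold P1, P2, P3, P4, c_p, c_np. ring. }
  assert (Hg : Un_growing (fun N => costN p q lam d pi N [] (Cont m n))).
  { intros N. apply costN_grow; auto. }
  pose proof (growing_ineq _ _ Hg T) as Ub.
  assert (Nn : forall N, 0 <= X1 N /\ 0 <= X2 N /\ 0 <= Y1 N /\ 0 <= Y2 N).
  { intros N; unfold X1, X2, Y1, Y2; repeat split; apply costN_nonneg; auto. }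
  assert (0 <= P1) by (unfold P1; apply Rmult_le_pos; nra).
  assert (0 <= P2) by (unfold P2; apply Rmult_le_pos; nra).
  assert (0 <= P3) by (unfold P3; apply Rmult_le_pos; nra).
  assert (0 <= P4) by (unfold P4; apply Rmult_le_pos; nra).
  assert (Hcost : forall N, P1 * X1 (S N) + P2 * X2 (S N) + P3 * Y1 (S N) + P4 * Y2 (S N) <= costN p q lam d pi (S (S N)) [] (Cont m n)).
  { intros N. rewrite costN_Cont. unfold step_exp. fold a. simpl ([] ++ _).
    rewrite !costN_shift, !costN_End.
    pose proof (Hd m n); pose proof (Hd (S m) n); pose proof (Hd m (S n)). rewrite Hd1.
    assert (0 <= d 1) by (rewrite <- Hd1; apply Hd).
    change (costN p q lam d (fun h s => pi ((Cont m n, true) :: h) s) (S N) [] (Cont 1 0)) with (X1 (S N)).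
    change (costN p q lam d (fun h s => pi ((Cont m n, true) :: h) s) (S N) [] (Cont 0 1)) with (X2 (S N)).
    change (costN p q lam d (fun h s => pi ((Cont m n, false) :: h) s) (S N) [] (Cont (S m) n)) with (Y1 (S N)).
    change (costN p q lam d (fun h s => pi ((Cont m n, false) :: h) s) (S N) [] (Cont m (S n))) with (Y2 (S N)).
    unfold P1, P2, P3, P4.
    assert (0 <= p*q*d 1) by (apply Rmult_le_pos; [apply Rmult_le_pos|]; lra).
    assert (0 <= p*(1-q)*d 1) by (apply Rmult_le_pos; [apply Rmult_le_pos|]; lra).
    assert (0 <= p*q*dmn d (S m) n) by (apply Rmult_le_pos; [apply Rmult_le_pos|]; lra).
    assert (0 <= p*(1-q)*dmn d m (S n)) by (apply Rmult_le_pos; [apply Rmult_le_pos|]; lra).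
    assert (0 <= a * (lam + dmn d m n + p*q*d 1 + p*(1-q)*d 1)) by (apply Rmult_le_pos; lra).
    assert (0 <= (1-a) * (p*q*dmn d (S m) n + p*(1-q)*dmn d m (S n))) by (apply Rmult_le_pos; lra).
    nra. }
  assert (Bd : forall (X : nat -> R) P, (forall N, 0 <= X N) -> Un_growing X ->
     (forall N, P * X (S N) <= costN p q lam d pi (S (S N)) [] (Cont m n)) -> 0 <= P ->
     forall N, P * X N <= v).
  { intros X P HX HgX HP HP0 N. eapply Rle_trans; [|apply (Ub (S (S N)))].
    eapply Rle_trans; [|apply HP]. apply Rmult_le_compat_l; auto. }
  assert (GX : forall pi' m' n', valid_policy pi' -> Un_growing (fun N => costN p q lam d pi' N [] (Cont m' n'))).
  { intros pi' m' n' V' N. apply costN_grow; auto. }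
  destruct (piece X1 P1 (J 1%nat 0%nat) v (GX _ _ _ VA) H
    (Bd X1 P1 (fun N => proj1 (Nn N)) (GX _ _ _ VA) ltac:(intros N; pose proof (Hcost N); pose proof (Nn (S N)); nra) H)
    (fun l Hl => proj1 (HJ 1%nat 0%nat) piA l VA Hl) eps He) as [N1 HN1].
  destruct (piece X2 P2 (J 0%nat 1%nat) v (GX _ _ _ VA) H0
    (Bd X2 P2 (fun N => proj1 (proj2 (Nn N))) (GX _ _ _ VA) ltac:(intros N; pose proof (Hcost N); pose proof (Nn (S N)); nra) H0)
    (fun l Hl => proj1 (HJ 0%nat 1%nat) piA l VA Hl) eps He) as [N2 HN2].
  destruct (piece Y1 P3 (J (S m) n) v (GX _ _ _ VB) H1
    (Bd Y1 P3 (fun N => proj1 (proj2 (proj2 (Nn N)))) (GX _ _ _ VB) ltac:(intros N; pose proof (Hcost N); pose proof (Nn (S N)); nra) H1)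
    (fun l Hl => proj1 (HJ (S m) n) piB l VB Hl) eps He) as [N3 HN3].
  destruct (piece Y2 P4 (J m (S n)) v (GX _ _ _ VB) H2
    (Bd Y2 P4 (fun N => proj2 (proj2 (proj2 (Nn N)))) (GX _ _ _ VB) ltac:(intros N; pose proof (Hcost N); pose proof (Nn (S N)); nra) H2)
    (fun l Hl => proj1 (HJ m (S n)) piB l VB Hl) eps He) as [N4 HN4].
  set (N := S (N1 + N2 + N3 + N4)).
  specialize (HN1 (S N) ltac:(unfold N; lia)). specialize (HN2 (S N) ltac:(unfold N; lia)).
  specialize (HN3 (S N) ltac:(unfold N; lia)). specialize (HN4 (S N) ltac:(unfold N; lia)).
  pose proof (Ub (S (S N))) as U. pose proof (EQ N) as E. cbv beta in U.
  rewrite E in U. clearbody N.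
  assert (Hmin : Rmin (c_p p q lam d J m n) (c_np p q d J m n) <= a * c_p p q lam d J m n + (1-a) * c_np p q d J m n).
  { pose proof (Rmin_l (c_p p q lam d J m n) (c_np p q d J m n)).
    pose proof (Rmin_r (c_p p q lam d J m n) (c_np p q d J m n)).
    assert (a * Rmin (c_p p q lam d J m n) (c_np p q d J m n) <= a * c_p p q lam d J m n) by (apply Rmult_le_compat_l; lra).
    assert ((1-a) * Rmin (c_p p q lam d J m n) (c_np p q d J m n) <= (1-a) * c_np p q d J m n) by (apply Rmult_le_compat_l; lra).
    lra. }
  unfold eps in *. lra.
Qed.

Lemma Rmin_diff A x y B : x - y <= B -> 0 <= B -> Rmin A x - Rmin A y <= B.
Proof. intros. unfold Rmin. destruct (Rle_dec A x), (Rle_dec A y); lra. Qed.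

Theorem mainTheorem10 (p q lam : R) (d : R -> R)
  (Hp : 0 < p < 1) (Hq : 0 <= q <= 1) (Hlam : 0 < lam)
  (HC1 : cond_C1 d) (HC2 : cond_C2 d) (HC3 : cond_C3 d) (HC4 : cond_C4 d)
  (J : nat -> nat -> R) (HJ : is_optimal_cost p q lam d J) :
  (forall m n k, in_P p q lam d J m n ->
     in_P p q lam d J (m + k)%nat n /\ in_P p q lam d J m (n + k)%nat) /\
  (forall m n k, in_Pbar p q lam d J m n ->
     in_Pbar p q lam d J (m + k)%nat n /\ in_Pbar p q lam d J m (n + k)%nat).
Proof.
  destruct (Deltaq_mono d q HC4 Hq) as [DQ1 DQ2].
  split.
  2: { intros m n k H. split; induction k as [|k IH].
       - rewrite Nat.add_0_r; auto.
       - rewrite Nat.add_succ_r. unfold in_Pbar in *. eapply Rle_trans; [apply IH|apply DQ1].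
       - rewrite Nat.add_0_r; auto.
       - rewrite Nat.add_succ_r. unfold in_Pbar in *. eapply Rle_trans; [apply IH|apply DQ2]. }
  destruct (dmn_props d HC2 HC4) as [Hd0 [M1 [M2 [Hd1 Hd2]]]].
  assert (G : good p q lam d) by (repeat split; auto; lra).
  pose proof (J_le_cp _ _ _ _ _ G Hd1 Hd2 HJ) as B1.
  pose proof (J_le_cnp _ _ _ _ _ G HJ) as B2.
  pose proof (J_ge_min _ _ _ _ _ G Hd1 Hd2 HJ) as B3.
  pose proof (J_ge_d _ _ _ _ _ G (proj1 Hp) M1 M2 HJ) as B4.
  set (A := lam + (1-p)*(1-q)*J 0%nat 1%nat + (1-p)*q*J 1%nat 0%nat + p * d 1).
  assert (Ecp : forall m n, c_p p q lam d J m n = A + dmn d m n) by (intros; unfold c_p, A; ring).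
  set (Gf := fun m n => J m n - dmn d m n).
  set (Hf := fun m n => c_np p q d J m n - dmn d m n).
  assert (EH : forall m n, Hf m n = (1-p)*q*Gf (S m) n + (1-p)*(1-q)*Gf m (S n) + Deltaq d q m n).
  { intros; unfold Hf, Gf, c_np, Deltaq, Delta1, Delta2; ring. }
  assert (EG : forall m n, Gf m n = Rmin A (Hf m n)).
  { intros m n. unfold Gf, Hf. specialize (B1 m n); specialize (B2 m n); specialize (B3 m n).
    rewrite Ecp in *. unfold Rmin in *. destruct (Rle_dec (A + dmn d m n) (c_np p q d J m n)),
      (Rle_dec A (c_np p q d J m n - dmn d m n)); lra. }
  assert (GB : forall m n, 0 <= Gf m n <= A).
  { intros m n. unfold Gf. specialize (B1 m n); specialize (B4 m n). rewrite Ecp in B1. lra. }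
  assert (Hc1 : 0 <= (1-p)*q) by nra. assert (Hc2 : 0 <= (1-p)*(1-q)) by nra.
  assert (CL : forall k m n, Gf m n - Gf (S m) n <= (1-p)^k * A /\ Gf m n - Gf m (S n) <= (1-p)^k * A).
  { intros k. induction k as [|k IH]; intros m n.
    - simpl. pose proof (GB m n); pose proof (GB (S m) n); pose proof (GB m (S n)). lra.
    - assert (0 <= (1-p)^k * A) by (apply Rmult_le_pos; [apply pow_le; lra| pose proof (GB 0%nat 0%nat); lra]).
      change ((1-p)^(S k)) with ((1-p) * (1-p)^k).
      assert (0 <= (1-p) * (1-p)^k * A) by (rewrite Rmult_assoc; apply Rmult_le_pos; lra).
      split; rewrite !EG; apply Rmin_diff; auto; rewrite !EH.
      + destruct (IH (S m) n) as [X _]. destruct (IH m (S n)) as [Y _].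
        pose proof (DQ1 m n).
        assert ((1-p)*q*(Gf (S m) n - Gf (S (S m)) n) <= (1-p)*q*((1-p)^k*A)) by (apply Rmult_le_compat_l; auto).
        assert ((1-p)*(1-q)*(Gf m (S n) - Gf (S m) (S n)) <= (1-p)*(1-q)*((1-p)^k*A)) by (apply Rmult_le_compat_l; auto).
        nra.
      + destruct (IH (S m) n) as [_ X]. destruct (IH m (S n)) as [_ Y].
        pose proof (DQ2 m n).
        assert ((1-p)*q*(Gf (S m) n - Gf (S m) (S n)) <= (1-p)*q*((1-p)^k*A)) by (apply Rmult_le_compat_l; auto).
        assert ((1-p)*(1-q)*(Gf m (S n) - Gf m (S (S n))) <= (1-p)*(1-q)*((1-p)^k*A)) by (apply Rmult_le_compat_l; auto).
        nra. }
  assert (A0 : 0 <= A) by (pose proof (GB 0%nat 0%nat); lra).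
  assert (GM : forall m n, Gf m n <= Gf (S m) n /\ Gf m n <= Gf m (S n)).
  { intros m n. split.
    - assert (Gf m n - Gf (S m) n <= 0); [|lra].
      apply (pow_small (1-p) _ A); [lra|auto|]. intros N; apply (CL N m n).
    - assert (Gf m n - Gf m (S n) <= 0); [|lra].
      apply (pow_small (1-p) _ A); [lra|auto|]. intros N; apply (CL N m n). }
  assert (HM : forall m n, Hf m n <= Hf (S m) n /\ Hf m n <= Hf m (S n)).
  { intros m n. rewrite !EH. pose proof (DQ1 m n); pose proof (DQ2 m n).
    destruct (GM (S m) n) as [X1 X2]. destruct (GM m (S n)) as [Y1 Y2].
    split.
    - assert ((1-p)*q*Gf (S m) n <= (1-p)*q*Gf (S (S m)) n) by (apply Rmult_le_compat_l; auto).
      assert ((1-p)*(1-q)*Gf m (S n) <= (1-p)*(1-q)*Gf (S m) (S n)) by (apply Rmult_le_compat_l; auto).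
      lra.
    - assert ((1-p)*q*Gf (S m) n <= (1-p)*q*Gf (S m) (S n)) by (apply Rmult_le_compat_l; auto).
      assert ((1-p)*(1-q)*Gf m (S n) <= (1-p)*(1-q)*Gf m (S (S n))) by (apply Rmult_le_compat_l; auto).
      lra. }
  assert (IP : forall m n, in_P p q lam d J m n <-> A <= Hf m n).
  { intros m n. unfold in_P, Hf. rewrite Ecp. split; intros; lra. }
  intros m n k H. rewrite IP in H. split; rewrite IP; induction k as [|k IH].
  - rewrite Nat.add_0_r; auto.
  - rewrite Nat.add_succ_r. eapply Rle_trans; [apply IH|apply HM].
  - rewrite Nat.add_0_r; auto.
  - rewrite Nat.add_succ_r. eapply Rle_trans; [apply IH|apply HM].
Qed.
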